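(* Let $\mathcal{H}$ be an $n$-dimensional (real or complex) Hilbert space, let $F=\{f_i\}_{i=1}^N$ be a tight frame for $\mathcal{H}$, and let $\{q_i\}_{i=1}^N$ be the weight number sequence associated with a probability sequence $\{p_i\}_{i=1}^N$. Then $S_F^{-1}F$ is the unique 1-erasure probabilistic optimal dual (POD) of $F$ if and only if $S_F^{-1}F$ is the unique 1-erasure PASOD-frame of $F$ (i.e. $\Delta_F^{(1)}=\{S_F^{-1}F\}$).
   Context: A finite sequence $F=\{f_i\}_{i=1}^N$ in $\mathcal{H}$ is a frame if there are $A,B>0$ with $A\|f\|^2\le\sum_{i=1}^N|\langle f,f_i\rangle|^2\le B\|f\|^2$ for all $f$; it is tight if one can take $A=B$. The frame operator is $S_Ff=\sum_{i=1}^N\langle f,f_i\rangle f_i$ and the canonical dual is $S_F^{-1}F=\{S_F^{-1}f_i\}_{i=1}^N$. A frame $G=\{g_i\}_{i=1}^N$ is a dual of $F$ if $f=\sum_i\langle f,f_i\rangle g_i=\sum_i\langle f,g_i\rangle f_i$ for all $f$. A probability sequence is $\{p_i\}_{i=1}^N$ with $0\le p_i\le1$, $\sum p_i=1$; weight numbers $q_i=\frac{\sum_{j} p_j}{\sum_{j} p_j-p_i}\cdot\frac{N-1}{n}$. For $\Lambda\subseteq\{1,\dots,N\}$ the error operator is $E_{\Lambda,(F,G)}f=\sum_{i\in\Lambda}q_i\langle f,f_i\rangle g_i$. Set $\mathcal{O}_P^{(1)}(F,G)=\max_{|\Lambda|=1}\|E_{\Lambda,(F,G)}\|$ and $\mathcal{A}_P^{(1)}(F,G)=\max_{|\Lambda|=1}\frac{\|E_{\Lambda,(F,G)}\|+\rho(E_{\Lambda,(F,G)})}{2}$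 ($\rho$ = spectral radius). A dual $G$ of $F$ is a 1-erasure POD of $F$ if it minimizes $\mathcal{O}_P^{(1)}(F,\cdot)$ over all duals of $F$, and a 1-erasure PASOD-frame if it minimizes $\mathcal{A}_P^{(1)}(F,\cdot)$ over all duals of $F$; $\Delta_F^{(1)}$ is the set of 1-erasure PASOD-frames of $F$. *)

(* Defs.v *)
(* Finite frames in an n-dimensional Hilbert space over a
   numeric closed field C (e.g. C = complex numbers); the real case is
   handled by a flag [isR] restricting all vectors to have real entries. *)
From HB Require Import structures.
From mathcomp Require Import all_boot all_order all_algebra.
From Stdlib Require Import ClassicalEpsilon.
Set Implicit Arguments. Unset Strict Implicit. Unset Printing Implicit Defensive.
Import Order.TTheory GRing.Theory Num.Theory.
Local Open Scope ring_scope.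

Section Frames.
Variables (C : numClosedFieldType) (n N : nat).

Definition okvec (isR : bool) (v : 'cV[C]_n) : bool :=
  isR ==> [forall k, v k 0 \is Num.real].

Definition okfam (isR : bool) (F : 'I_N -> 'cV[C]_n) : Prop :=
  forall i, okvec isR (F i).

Definition inner (f g : 'cV[C]_n) : C := \sum_(k < n) f k 0 * (g k 0)^*.
Definition vnorm (f : 'cV[C]_n) : C := sqrtC (inner f f).

Definition is_frame (isR : bool) (F : 'I_N -> 'cV[C]_n) : Prop :=
  exists A B : C, 0 < A /\ 0 < B /\
    forall f, okvec isR f ->
      A * vnorm f ^+ 2 <= \sum_(i < N) `|inner f (F i)| ^+ 2 <=
      B * vnorm f ^+ 2.

Definition is_tight_frame (isR : bool) (F : 'I_N -> 'cV[C]_n) : Prop :=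
  exists A : C, 0 < A /\
    forall f, okvec isR f ->
      A * vnorm f ^+ 2 <= \sum_(i < N) `|inner f (F i)| ^+ 2 <=
      A * vnorm f ^+ 2.

(* frame operator S_F f = sum_i <f, f_i> f_i, as a matrix *)
Definition frame_op (F : 'I_N -> 'cV[C]_n) : 'M[C]_n :=
  \sum_(i < N) (F i *m (map_mx Num.conj (F i))^T).

Definition canon_dual (F : 'I_N -> 'cV[C]_n) : 'I_N -> 'cV[C]_n :=
  fun i => invmx (frame_op F) *m F i.

Definition is_dual (isR : bool) (F G : 'I_N -> 'cV[C]_n) : Prop :=
  okfam isR G /\ is_frame isR G /\
  forall f, okvec isR f ->
    f = \sum_(i < N) inner f (F i) *: G i /\
    f = \sum_(i < N) inner f (G i) *: F i.

Definition is_prob_seq (p : 'I_N -> C) : Prop :=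
  (forall i, 0 <= p i <= 1) /\ \sum_(i < N) p i = 1.

Definition weight (p : 'I_N -> C) (i : 'I_N) : C :=
  (\sum_(j < N) p j) / (\sum_(j < N) p j - p i) * ((N.-1)%:R / n%:R).

(* error operator for Lambda = {i}: f |-> q_i <f,f_i> g_i *)
Definition err_op (q : 'I_N -> C) (F G : 'I_N -> 'cV[C]_n) (i : 'I_N)
  : 'M[C]_n := q i *: (G i *m (map_mx Num.conj (F i))^T).

End Frames.

(* the maximum of a set of numbers (0 if it has none); used below only on
   sets that contain 0 and have a maximum *)
Definition is_max {C : numClosedFieldType} (P : C -> Prop) (r : C) : Prop :=
  P r /\ forall x, P x -> x <= r.

Definition maxof {C : numClosedFieldType} (P : C -> Prop) : C :=
  epsilon (inhabits 0)
    (fun r => is_max P r \/ (~ (exists s, is_max P s) /\ r = 0)).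

Definition opnorm {C : numClosedFieldType} {n : nat} (isR : bool)
  (E : 'M[C]_n) : C :=
  maxof (fun r => r = 0 \/
    exists f : 'cV[C]_n, okvec isR f /\ vnorm f = 1 /\ r = vnorm (E *m f)).

Definition specrad {C : numClosedFieldType} {n : nat} (E : 'M[C]_n) : C :=
  maxof (fun r => r = 0 \/ exists a, eigenvalue E a /\ r = `|a|).

Definition O1 {C : numClosedFieldType} {n N : nat} (isR : bool)
  (q : 'I_N -> C) (F G : 'I_N -> 'cV[C]_n) : C :=
  \big[Num.max/0]_(i < N) opnorm isR (err_op q F G i).

Definition A1 {C : numClosedFieldType} {n N : nat} (isR : bool)
  (q : 'I_N -> C) (F G : 'I_N -> 'cV[C]_n) : C :=
  \big[Num.max/0]_(i < N)
     ((opnorm isR (err_op q F G i) + specrad (err_op q F G i)) / 2%:R).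

Definition is_POD {C : numClosedFieldType} {n N : nat} (isR : bool)
  (q : 'I_N -> C) (F G : 'I_N -> 'cV[C]_n) : Prop :=
  is_dual isR F G /\ forall G', is_dual isR F G' -> O1 isR q F G <= O1 isR q F G'.

Definition is_PASOD {C : numClosedFieldType} {n N : nat} (isR : bool)
  (q : 'I_N -> C) (F G : 'I_N -> 'cV[C]_n) : Prop :=
  is_dual isR F G /\ forall G', is_dual isR F G' -> A1 isR q F G <= A1 isR q F G'.

(* Main.v *)
Require Import Defs.
From HB Require Import structures.
From mathcomp Require Import all_boot all_order all_algebra.
From mathcomp Require Import ring.
From Stdlib Require Import FunctionalExtensionality Classical ClassicalEpsilon.
Import Order.TTheory GRing.Theory Num.Theory.
Local Open Scope ring_scope.
Set Implicit Arguments. Unset Strict Implicit. Unset Printing Implicit Defensive.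

Section Inner.
Variables (C : numClosedFieldType) (n : nat).
Implicit Types (f g h u v : 'cV[C]_n) (a b : C).

Local Notation inner := (@inner C n).
Local Notation vnorm := (@vnorm C n).

Lemma innerDl f g h : inner (f + g) h = inner f h + inner g h.
Proof. by rewrite /inner -big_split; apply: eq_bigr => k _; rewrite !mxE mulrDl. Qed.
Lemma innerZl a f g : inner (a *: f) g = a * inner f g.
Proof. by rewrite /inner mulr_sumr; apply: eq_bigr => k _; rewrite !mxE mulrA. Qed.
Lemma innerNl f g : inner (- f) g = - inner f g.
Proof. by rewrite -scaleN1r innerZl mulN1r. Qed.
Lemma innerBl f g h : inner (f - g) h = inner f h - inner g h.
Proof. by rewrite innerDl innerNl. Qed.
Lemma inner0l g : inner 0 g = 0.
Proof. by rewrite /inner big1 // => k _; rewrite mxE mul0r. Qed.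
Lemma innerC f g : inner g f = (inner f g)^*.
Proof.
rewrite /inner rmorph_sum; apply: eq_bigr => k _.
by rewrite rmorphM /= conjCK mulrC.
Qed.
Lemma innerDr f g h : inner h (f + g) = inner h f + inner h g.
Proof. by rewrite innerC innerDl rmorphD /= -!innerC. Qed.
Lemma innerZr a f g : inner g (a *: f) = a^* * inner g f.
Proof. by rewrite innerC innerZl rmorphM /= -innerC. Qed.
Lemma innerNr f g : inner g (- f) = - inner g f.
Proof. by rewrite innerC innerNl rmorphN /= -innerC. Qed.
Lemma innerBr f g h : inner h (f - g) = inner h f - inner h g.
Proof. by rewrite innerDr innerNr. Qed.
Lemma inner0r g : inner g 0 = 0.
Proof. by rewrite innerC inner0l rmorph0. Qed.
Lemma inner_suml I (r : seq I) (P : pred I) (F : I -> 'cV[C]_n) g :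
  inner (\sum_(i <- r | P i) F i) g = \sum_(i <- r | P i) inner (F i) g.
Proof.
elim/big_rec2: _ => [|i x y _ <-]; first exact: inner0l.
by rewrite innerDl.
Qed.
Lemma inner_sumr I (r : seq I) (P : pred I) (F : I -> 'cV[C]_n) g :
  inner g (\sum_(i <- r | P i) F i) = \sum_(i <- r | P i) inner g (F i).
Proof.
elim/big_rec2: _ => [|i x y _ <-]; first exact: inner0r.
by rewrite innerDr.
Qed.

Lemma inner_ge0 f : 0 <= inner f f.
Proof. by rewrite /inner sumr_ge0 // => k _; rewrite -normCK exprn_ge0. Qed.
Lemma inner_real f : inner f f \is Num.real.
Proof. exact: ger0_real (inner_ge0 f). Qed.
Lemma inner_eq0 f : inner f f = 0 -> f = 0.
Proof.
move=> /eqP; rewrite /inner psumr_eq0 => [/allP H|k _]; last by rewrite -normCK exprn_ge0.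
apply/matrixP => k j; rewrite (ord1 j) mxE.
have /H : k \in index_enum 'I_n by rewrite mem_index_enum.
by rewrite /= -normCK expf_eq0 /= normr_eq0 => /eqP.
Qed.
Lemma vnorm_ge0 f : 0 <= vnorm f.
Proof. by rewrite sqrtC_ge0 inner_ge0. Qed.
Lemma vnorm_real f : vnorm f \is Num.real.
Proof. exact: ger0_real (vnorm_ge0 f). Qed.
Lemma vnormK f : vnorm f ^+ 2 = inner f f.
Proof. exact: sqrtCK. Qed.
Lemma vnorm0 : vnorm 0 = 0.
Proof. by rewrite /vnorm inner0l sqrtC0. Qed.
Lemma vnorm_eq0 f : vnorm f = 0 -> f = 0.
Proof. by move=> /eqP; rewrite sqrtC_eq0 => /eqP /inner_eq0. Qed.
Lemma vnorm_gt0 f : f != 0 -> 0 < vnorm f.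
Proof.
move=> nz; rewrite lt_def vnorm_ge0 andbT; apply/eqP => /vnorm_eq0 h.
by rewrite h eqxx in nz.
Qed.
Lemma sqrtC_sqr_ge0 (x : C) : 0 <= x -> sqrtC (x ^+ 2) = x.
Proof.
move=> x0; apply/eqP; rewrite -(eqrXn2 (n:=2)) // ?sqrtCK //.
by rewrite sqrtC_ge0 exprn_ge0.
Qed.
Lemma vnormZ a f : vnorm (a *: f) = `|a| * vnorm f.
Proof.
rewrite /vnorm innerZl innerZr mulrA -normCK.
rewrite sqrtCM ?sqrtC_sqr_ge0 ?normr_ge0 //.
  by rewrite nnegrE exprn_ge0.
by rewrite nnegrE inner_ge0.
Qed.
Lemma innerCreal f : (inner f f)^* = inner f f.
Proof. by rewrite -innerC. Qed.

Lemma CS2 f g : `|inner f g| ^+ 2 <= inner f f * inner g g.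
Proof.
have [->|gnz] := eqVneq g 0.
  by rewrite inner0r inner0l normr0 expr0n /= mulr0.
have gg0 : 0 < inner g g by rewrite -sqrtC_gt0 vnorm_gt0.
set l := inner f g / inner g g.
have := inner_ge0 (f - l *: g).
rewrite innerBl !innerBr !innerZl !innerZr.
have hl : l^* = (inner f g)^* / inner g g.
  by rewrite /l rmorphM /= fmorphV /= innerCreal.
rewrite hl -innerC normCK /l.
set a := inner f g; set b := inner g f; set c := inner g g.
have hb : b = a^* by rewrite /b innerC.
rewrite divfK ?gt_eqF // subrr subr0 hb => H.
rewrite -ler_pdivrMr //; rewrite -subr_ge0.
by have -> : a * a^* / c = a^* / c * a by ring.

Qed.

Lemma CS f g : `|inner f g| <= vnorm f * vnorm g.
Proof.
rewrite -(ler_pXn2r (n:=2)) // ?nnegrE ?mulr_ge0 ?vnorm_ge0 //.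
by rewrite exprMn !vnormK CS2.
Qed.

Lemma inner_expand f g : inner (f + g) (f + g) =
  inner f f + inner g g + (inner f g + (inner f g)^*).
Proof.
rewrite !innerDl !innerDr [inner g f]innerC.
ring.
Qed.

End Inner.

Section More.
Variables (C : numClosedFieldType) (n : nat).
Implicit Types (f g h u v x : 'cV[C]_n) (a b : C).
Local Notation inner := (@inner C n).
Local Notation vnorm := (@vnorm C n).

Lemma Re2E (z : C) : z + z^* = 2%:R * 'Re z.
Proof. by rewrite ReE mulrC divfK ?pnatr_eq0. Qed.
Lemma Re2_le_norm (z : C) : z + z^* <= 2%:R * `|z|.
Proof.
have H := leif_Re_Creal z; have H1 : 'Re z <= `|z| by case: H.
by rewrite Re2E ler_wpM2l ?ler0n.
Qed.
Lemma Re2_real (z : C) : z + z^* \is Num.real.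
Proof. by rewrite Re2E rpredM ?Creal_Re ?rpred_nat. Qed.

Lemma vnorm_triangle f g : vnorm (f + g) <= vnorm f + vnorm g.
Proof.
rewrite -(ler_pXn2r (n:=2)) ?nnegrE ?addr_ge0 ?vnorm_ge0 //.
rewrite vnormK inner_expand sqrrD !vnormK [X in _ <= X]addrAC lerD2l.
apply: (le_trans (Re2_le_norm _)).
by rewrite mulr_natl lerMn2r /= CS.
Qed.

Definition adj (v : 'cV[C]_n) : 'rV[C]_n := (map_mx Num.conj v)^T.

Lemma adj_mul x v : adj v *m x = (inner x v)%:M.
Proof.
rewrite [LHS]mx11_scalar; congr (_%:M); rewrite !mxE /inner.
by apply: eq_bigr => k _; rewrite !mxE mulrC.
Qed.

Lemma rank1_mul u v x : (u *m adj v) *m x = inner x v *: u.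
Proof. by rewrite -mulmxA adj_mul mul_mx_scalar. Qed.

Lemma vnorm_rank1 u v x : vnorm ((u *m adj v) *m x) = `|inner x v| * vnorm u.
Proof. by rewrite rank1_mul vnormZ. Qed.

Lemma adj_eq0 v : (adj v == 0) = (v == 0).
Proof.
apply/eqP/eqP => [H|->]; last by apply/matrixP => i j; rewrite !mxE rmorph0.
apply/matrixP => i j; move/matrixP: H => /(_ j i); rewrite !mxE (ord1 j).
by move/eqP; rewrite conjC_eq0 => /eqP.
Qed.

Lemma adjZ a v : adj (a *: v) = a^* *: adj v.
Proof. by apply/matrixP => i j; rewrite !mxE rmorphM. Qed.

End More.

Lemma maxofE (C : numClosedFieldType) (P : C -> Prop) r : is_max P r -> maxof P = r.
Proof.
move=> Hr; rewrite /maxof.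
set Q := (fun r0 => _).
have ex : exists r0, Q r0 by exists r; left.
case: (ClassicalEpsilon.epsilon_spec (inhabits 0) Q ex) => [[Pm Hm]|[Hn _]].
  by apply/le_anti/andP; split; [apply: (proj2 Hr) | apply: Hm; case: Hr].
by exfalso; apply: Hn; exists r.
Qed.

Section Ops.
Variables (C : numClosedFieldType) (n : nat).
Implicit Types (f g h u v x : 'cV[C]_n) (a b : C) (isR : bool).
Local Notation inner := (@inner C n).
Local Notation vnorm := (@vnorm C n).
Local Notation okvec := (@okvec C n).

Lemma okvecP isR v : reflect (isR -> forall k, v k 0 \is Num.real) (okvec isR v).
Proof.
rewrite /okvec; case: isR => /=; last by constructor.
by apply: (iffP forallP) => [H _|H] //; apply: H.
Qed.
Lemma okvecF v : okvec false v. Proof. by []. Qed.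
Lemma okvecZ' isR a v : (isR -> a \is Num.real) -> okvec isR v -> okvec isR (a *: v).
Proof. by move=> ar /okvecP H; apply/okvecP => R; move: (H R) => {}H k; rewrite mxE rpredM ?ar. Qed.
Lemma okvecZ isR a v : a \is Num.real -> okvec isR v -> okvec isR (a *: v).
Proof. by move=> ar; apply: okvecZ'. Qed.
Lemma okvecD isR u v : okvec isR u -> okvec isR v -> okvec isR (u + v).
Proof. by move=> /okvecP H1 /okvecP H2; apply/okvecP => R k; rewrite mxE rpredD ?H1 ?H2. Qed.
Lemma okvecN isR v : okvec isR v -> okvec isR (- v).
Proof. by move=> /okvecP H1; apply/okvecP => R k; rewrite mxE rpredN ?H1. Qed.
Lemma okvecB isR u v : okvec isR u -> okvec isR v -> okvec isR (u - v).
Proof. by move=> ? ?; rewrite okvecD ?okvecN. Qed.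
Lemma okvec0 isR : okvec isR 0.
Proof. by apply/okvecP => _ k; rewrite mxE rpred0. Qed.
Lemma okvec_sum isR I (r : seq I) (P : pred I) (F : I -> 'cV[C]_n) :
  (forall i, P i -> okvec isR (F i)) -> okvec isR (\sum_(i <- r | P i) F i).
Proof.
move=> H; elim/big_rec: _ => [|i x Pi Hx]; first exact: okvec0.
by rewrite okvecD ?H.
Qed.
Lemma okvec_delta isR k : okvec isR (delta_mx k 0).
Proof. by apply/okvecP => _ j; rewrite mxE; case: (_ && _); rewrite ?rpred0 ?rpred1. Qed.
Lemma inner_okreal isR f g : okvec isR f -> okvec isR g -> isR -> inner f g \is Num.real.
Proof.
move=> /okvecP H1 /okvecP H2 R; rewrite /inner rpred_sum // => k _.
by rewrite rpredM ?H1 // conj_Creal ?H2.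
Qed.

Lemma opnorm_rank1 isR u v : okvec isR v ->
  opnorm isR (u *m adj v) = vnorm u * vnorm v.
Proof.
move=> okv; apply: maxofE; split.
  have [->|vnz] := eqVneq v 0; first by left; rewrite vnorm0 mulr0.
  have vp := vnorm_gt0 vnz.
  right; exists ((vnorm v)^-1 *: v); split.
    by rewrite okvecZ ?rpredV ?vnorm_real.
  split.
    by rewrite vnormZ ger0_norm ?invr_ge0 ?vnorm_ge0 // mulVf ?gt_eqF.
  rewrite vnorm_rank1 innerZl -vnormK expr2 mulrA mulVf ?gt_eqF // mul1r.
  by rewrite ger0_norm ?vnorm_ge0 // mulrC.
move=> r [->|[x [_ [x1 ->]]]]; first by rewrite mulr_ge0 ?vnorm_ge0.
rewrite vnorm_rank1 mulrC ler_wpM2l ?vnorm_ge0 //.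
by apply: (le_trans (CS _ _)); rewrite x1 mul1r.
Qed.

Lemma specrad_rank1 u v : specrad (u *m adj v) = `|inner u v|.
Proof.
apply: maxofE; split.
  have [->|vnz] := eqVneq v 0; first by left; rewrite inner0r normr0.
  right; exists (inner u v); split => //.
  apply/eigenvalueP; exists (adj v); last by rewrite adj_eq0.
  by rewrite mulmxA adj_mul mul_scalar_mx.
move=> r [->|[a [/eigenvalueP [y Hy ynz] ->]]]; first by rewrite normr_ge0.
have [->|anz] := eqVneq a 0; first by rewrite normr0 normr_ge0.
set s := (y *m u) 0 0.
have ys : y *m u = s%:M by rewrite [LHS]mx11_scalar.
move: Hy; rewrite mulmxA ys mul_scalar_mx => Hy.
have yE : y = (s / a) *: adj v.
  by rewrite mulrC -scalerA Hy scalerA mulVf // scale1r.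
have sE : s = s / a * inner u v.
  have := congr1 (fun M : 'M_1 => M 0 0) ys.
  by rewrite yE -scalemxAl adj_mul /= !mxE /= !mulr1n => H; rewrite {1}H.
have snz : s != 0.
  apply: contra ynz => /eqP s0; rewrite yE s0 mul0r scale0r //.
have : s * a = s * inner u v.
  by rewrite {1}sE mulrAC divfK.
by move=> /(mulfI snz) ->.
Qed.

End Ops.

Section Frame.
Variables (C : numClosedFieldType) (n N : nat) (isR : bool).
Implicit Types (f g h u v x : 'cV[C]_n) (a b : C).
Local Notation inner := (@inner C n).
Local Notation vnorm := (@vnorm C n).
Local Notation okvec := (@okvec C n).

Definition Sv (F : 'I_N -> 'cV[C]_n) f := \sum_i inner f (F i) *: F i.

Lemma frame_op_mul (F : 'I_N -> 'cV[C]_n) f : frame_op F *m f = Sv F f.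
Proof. by rewrite /frame_op mulmx_suml; apply: eq_bigr => i _; rewrite rank1_mul. Qed.

Lemma SvD F f g : Sv F (f + g) = Sv F f + Sv F g.
Proof. by rewrite /Sv -big_split; apply: eq_bigr => i _; rewrite innerDl scalerDl. Qed.
Lemma SvZ F a f : Sv F (a *: f) = a *: Sv F f.
Proof. by rewrite /Sv scaler_sumr; apply: eq_bigr => i _; rewrite innerZl scalerA. Qed.
Lemma Sv_ok F f : okfam isR F -> okvec isR f -> okvec isR (Sv F f).
Proof.
move=> oF hf; apply: okvec_sum => i _; apply: okvecZ' => // R.
exact: inner_okreal R.
Qed.
Lemma Sv_inner F f g : inner (Sv F f) g = \sum_i inner f (F i) * inner (F i) g.
Proof. by rewrite inner_suml; apply: eq_bigr => i _; rewrite innerZl. Qed.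

Lemma tight_S (F : 'I_N -> 'cV[C]_n) : okfam isR F -> is_tight_frame isR F ->
  exists A, 0 < A /\ frame_op F = A%:M.
Proof.
move=> oF [A [A0 HA]]; exists A; split => //.
have Ar : A \is Num.real by apply: gtr0_real.
pose T f := Sv F f - A *: f.
have TD f g : T (f + g) = T f + T g.
  by rewrite /T SvD scalerDr opprD addrACA.
have TZ a f : T (a *: f) = a *: T f.
  by rewrite /T SvZ scalerBr !scalerA mulrC.
have Tok f : okvec isR f -> okvec isR (T f).
  by move=> hf; rewrite okvecB ?Sv_ok ?okvecZ.
have TQ f : okvec isR f -> inner (T f) f = 0.
  move=> hf; have /andP [h1 h2] := HA f hf.
  have h : \sum_(i < N) `|inner f (F i)| ^+ 2 = A * inner f f.
    by apply/le_anti; rewrite -vnormK h1 h2.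
  rewrite /T innerBl innerZl Sv_inner -h; apply/eqP; rewrite subr_eq0; apply/eqP.
  by apply: eq_bigr => i _; rewrite normCK -innerC.
have TH f g : inner (T f) g = (inner (T g) f)^*.
  rewrite /T !innerBl !innerZl !Sv_inner rmorphB rmorphM /= (conj_Creal Ar).
  rewrite -(innerC g f) rmorph_sum /=; congr (_ - _); apply: eq_bigr => i _.
  by rewrite rmorphM /= -!innerC mulrC.
have TB f g : okvec isR f -> okvec isR g -> inner (T f) g = 0.
  move=> hf og.
  have key : forall g', okvec isR g' ->
      inner (T f) g' + (inner (T f) g')^* = 0.
    move=> g' og'; have := TQ _ (okvecD hf og').
    rewrite TD innerDl !innerDr TQ // TQ // add0r addr0.
    by rewrite [inner (T g') f]TH. 
  set b := inner (T f) g.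
  have okbg : okvec isR (b *: g).
    by apply: okvecZ' => // R; apply: inner_okreal (Tok _ hf) og R.
  have := key _ okbg; rewrite innerZr -/b rmorphM /= conjCK.
  rewrite mulrC -mulr2n => /eqP; rewrite mulrn_eq0 /= mulf_eq0 conjC_eq0.
  by rewrite orbb => /eqP.
have Tz f : okvec isR f -> T f = 0.
  by move=> hf; apply: inner_eq0; apply: TB; rewrite ?Tok.
have SA f : okvec isR f -> Sv F f = A *: f.
  by move=> hf; apply/eqP; rewrite -subr_eq0; apply/eqP; apply: Tz.
apply/matrixP => i k.
have := congr1 (fun M : 'cV_n => M i 0) (SA _ (@okvec_delta _ _ isR k)).
rewrite -frame_op_mul -colE !mxE /= => ->.
by rewrite eqxx andbT; case: (i == k); rewrite ?mulr1 ?mulr0.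
Qed.

End Frame.

Lemma two_ab_le (C : numClosedFieldType) (B a b : C) : 0 < B ->
  a \is Num.real -> b \is Num.real -> 2%:R * (a * b) <= B * a ^+ 2 + b ^+ 2 / B.
Proof.
move=> B0 ar br.
have h : 0 <= (B * a - b) ^+ 2 / B.
  by rewrite divr_ge0 ?(ltW B0) // -realEsqr rpredB // rpredM // gtr0_real.
rewrite -subr_ge0; apply: (le_trans h) => {h}.
have -> : (B * a - b) ^+ 2 / B = B * a ^+ 2 + b ^+ 2 / B - 2%:R * (a * b).
  by field; rewrite gt_eqF.
by [].
Qed.

Section Dual.
Variables (C : numClosedFieldType) (n N : nat) (isR : bool).
Implicit Types (f g h u v x : 'cV[C]_n) (a b : C).
Local Notation inner := (@inner C n).
Local Notation vnorm := (@vnorm C n).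
Local Notation okvec := (@okvec C n).

Lemma dual_frame (F G : 'I_N -> 'cV[C]_n) : is_frame isR F ->
  (forall f, okvec isR f -> f = \sum_i inner f (G i) *: F i) -> is_frame isR G.
Proof.
move=> [A [B [A0 [B0 HF]]]] Hrec.
exists B^-1, (\sum_i vnorm (G i) ^+ 2 + 1); split; first by rewrite invr_gt0.
split; first by rewrite ltr_pwDr ?ltr01 // sumr_ge0 // => i _; rewrite exprn_ge0 ?vnorm_ge0.
move=> f hf; rewrite vnormK; apply/andP; split.
  set X := \sum_i _.
  have X0 : 0 <= X by rewrite sumr_ge0 // => i _; rewrite exprn_ge0.
  have /andP [_ hY] := HF f hf; rewrite vnormK in hY.
  set Y := \sum_i _ in hY.
  have h1 : inner f f <= \sum_i `|inner f (G i)| * `|inner f (F i)|.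
    rewrite -[inner f f]ger0_norm ?inner_ge0 //.
    rewrite {1}(Hrec f hf) inner_suml.
    apply: (le_trans (ler_norm_sum _ _ _)); apply: ler_sum => i _.
    by rewrite innerZl normrM [inner (F i) f]innerC norm_conjC.
  have h2 : 2%:R * (\sum_i `|inner f (G i)| * `|inner f (F i)|) <= B * X + Y / B.
    rewrite mulr_sumr /X /Y mulr_sumr mulr_suml -big_split /=.
    apply: ler_sum => i _; apply: two_ab_le => //; exact: normr_real.
  have h3 : Y / B <= inner f f.
    by rewrite ler_pdivrMr // mulrC.
  have h4 : 2%:R * inner f f <= B * X + inner f f.
    apply: (le_trans _ (lerD (lexx _) h3)); apply: (le_trans _ h2).
    by rewrite ler_wpM2l ?ler0n.
  rewrite mulrC ler_pdivrMr //.
  have : inner f f <= B * X.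
    by rewrite -(lerD2r (inner f f)); apply: le_trans h4; rewrite mulr_natl mulr2n.
  by rewrite mulrC.
apply: (@le_trans _ _ ((\sum_i vnorm (G i) ^+ 2) * inner f f)).
  rewrite mulr_suml; apply: ler_sum => i _.
  by rewrite vnormK mulrC CS2.
by rewrite mulrDl mul1r lerDl inner_ge0.
Qed.
End Dual.

Section Descent.
Variables (C : numClosedFieldType) (n : nat).
Implicit Types (f g h u v x : 'cV[C]_n) (a b : C).
Local Notation inner := (@inner C n).
Local Notation vnorm := (@vnorm C n).

Lemma expand_t u h (t : C) : t \is Num.real ->
  inner (u + t *: h) (u + t *: h) =
  inner u u + t ^+ 2 * inner h h + t * (inner h u + (inner h u)^*).
Proof.
move=> tr; rewrite inner_expand !innerZl !innerZr (conj_Creal tr) (innerC h u).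
rewrite rmorphM /= (conj_Creal tr) conjCK; ring.
Qed.

Lemma descent u h : u != 0 ->
  vnorm u * vnorm (u + h) + `|inner (u + h) u| <= 2%:R * vnorm u ^+ 2 ->
  exists tau, 0 < tau /\ forall t, 0 < t -> t <= tau -> vnorm (u + t *: h) <= vnorm u.
Proof.
move=> unz Hyp.
have u0 := vnorm_gt0 unz.
set w := inner h u; set x := w + w^*.
have xr : x \is Num.real by apply: Re2_real.
have zE : inner (u + h) u = inner u u + w by rewrite innerDl.
have Hz1 : 2%:R * inner u u + x <= 2%:R * `|inner (u + h) u|.
  apply: (le_trans _ (Re2_le_norm _)); rewrite zE rmorphD /= innerCreal.
  have E : 2%:R * inner u u + (w + w^*) = inner u u + w + (inner u u + w^*) by ring.
  by rewrite /x E.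
have Hz2 : `|inner (u + h) u| <= vnorm u * vnorm (u + h).
  by rewrite mulrC CS.
have x0 : x <= 0.
  have : 2%:R * inner u u + x <= 2%:R * inner u u.
    apply: (le_trans Hz1); rewrite -vnormK.
    apply: (le_trans _ Hyp); rewrite mulr_natl mulr2n lerD2r //.
  by rewrite -{2}[2%:R * _]addr0 lerD2l.
have [->|hnz] := eqVneq h 0.
  by exists 1; split => // t _ _; rewrite scaler0 addr0.
have hh0 : 0 < inner h h by rewrite -sqrtC_gt0 vnorm_gt0.
have [x0'|xlt] := eqVneq x 0.
  exfalso.
  have U1 : inner u u <= `|inner (u + h) u|.
    by rewrite -(ler_pM2l (ltr0n _ 2)) -[X in X <= _]addr0 -x0'.
  have : vnorm u * vnorm (u + h) <= vnorm u * vnorm u.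
    rewrite -expr2 vnormK; move: Hyp; rewrite -vnormK.
    rewrite mulr_natl mulr2n => Hyp.
    rewrite -(lerD2r (vnorm u ^+ 2)); apply: (le_trans _ Hyp).
    by rewrite lerD2l vnormK.
  rewrite ler_pM2l // => Hn.
  have : vnorm (u + h) ^+ 2 <= vnorm u ^+ 2.
    by rewrite ler_pXn2r ?nnegrE ?vnorm_ge0.
  have := expand_t u h (rpred1 _); rewrite !scale1r expr1n mul1r mul1r -/w -/x x0' addr0.
  rewrite -!vnormK => ->; rewrite -lerBrDl subrr => H.
  by move: H; rewrite vnormK => H; have := lt_le_trans hh0 H; rewrite ltxx.
have xn : x < 0 by rewrite lt_def eq_sym xlt x0.
exists (- x / inner h h); split.
  by rewrite divr_gt0 // oppr_gt0.
move=> t t0 tle.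
have tr : t \is Num.real by apply: gtr0_real.
rewrite -(ler_pXn2r (n:=2)) ?nnegrE ?vnorm_ge0 // !vnormK expand_t // -/w -/x.
rewrite -addrA gerDl.
have -> : t ^+ 2 * inner h h + t * x = t * (t * inner h h + x) by ring.
rewrite pmulr_rle0 //.
by rewrite -lerBrDr sub0r -ler_pdivlMr.
Qed.
End Descent.

Section BigMax.
Variables (C : numClosedFieldType) (N : nat).
Implicit Types (x : 'I_N -> C).

Lemma max_real_le (a b c : C) : a \is Num.real -> b \is Num.real ->
  a <= c -> b <= c -> Num.max a b <= c.
Proof. by move=> ar br; case: (real_leP ar br). Qed.
Lemma le_max_l (a b : C) : a \is Num.real -> b \is Num.real -> a <= Num.max a b.
Proof. by move=> ar br; case: (real_leP ar br) => // /ltW. Qed.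
Lemma le_max_r (a b : C) : a \is Num.real -> b \is Num.real -> b <= Num.max a b.
Proof. by move=> ar br; case: (real_leP ar br) => // /ltW. Qed.

Lemma bmax_real x : (forall i, x i \is Num.real) -> \big[Num.max/0]_i x i \is Num.real.
Proof.
move=> H; apply: (big_ind (fun y => y \is Num.real)); first exact: rpred0.
  by move=> a b ar br; exact: max_real.
by move=> i _; apply: H.
Qed.

Lemma bmax_ge0 x : (forall i, x i \is Num.real) -> 0 <= \big[Num.max/0]_i x i.
Proof.
move=> H; elim/big_rec: _ => // i a _ a0.
by apply: (le_trans a0); apply: le_max_r => //; exact: ger0_real.
Qed.

Lemma bmax_seq_real x (r : seq 'I_N) : (forall i, x i \is Num.real) ->
  \big[Num.max/0]_(j <- r) x j \is Num.real.
Proof.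
move=> H; apply: (big_ind (fun y => y \is Num.real)); first exact: rpred0.
  by move=> a b ar br; exact: max_real.
by move=> j _; apply: H.
Qed.

Lemma bmax_ub x i : (forall i, x i \is Num.real) -> x i <= \big[Num.max/0]_i x i.
Proof.
move=> H; have : i \in index_enum 'I_N by rewrite mem_index_enum.
elim: (index_enum 'I_N) => // j r IH; rewrite inE big_cons => /orP [/eqP ->|ir].
  by apply: le_max_l => //; apply: bmax_seq_real.
apply: (le_trans (IH ir)); apply: le_max_r => //; exact: bmax_seq_real.
Qed.

Lemma bmax_le x (y : C) : (forall i, x i \is Num.real) -> 0 <= y ->
  (forall i, x i <= y) -> \big[Num.max/0]_i x i <= y.
Proof.
move=> H y0 Hy; elim/big_rec: _ => // i a _ Ha; apply: max_real_le => //.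
by rewrite (ler_real Ha) ger0_real.
Qed.
End BigMax.

Lemma common_tau (C : numClosedFieldType) N (P : 'I_N -> C -> Prop) :
  (forall i, exists tau, 0 < tau /\ forall t, 0 < t -> t <= tau -> P i t) ->
  exists t, 0 < t /\ forall i, P i t.
Proof.
move=> H.
suff [tau [t0 Ht]] : exists tau : C, 0 < tau /\
    forall i, i \in index_enum 'I_N -> forall t, 0 < t -> t <= tau -> P i t.
  by exists tau; split => // i; apply: Ht => //; rewrite mem_index_enum.
elim: (index_enum 'I_N) => [|j r [tr [tr0 Hr]]].
  by exists 1; split => //.
have [tj [tj0 Hj]] := H j.
have [le|lt] := real_leP (gtr0_real tj0) (gtr0_real tr0).
  exists tj; split => // i; rewrite inE => /orP [/eqP ->|ir] t t0 tle.
    exact: Hj.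
  by apply: Hr => //; apply: le_trans le.
exists tr; split => // i; rewrite inE => /orP [/eqP ->|ir] t t0 tle.
  by apply: Hj => //; apply: le_trans (ltW lt).
exact: Hr.
Qed.

Section Main.
Variables (C : numClosedFieldType) (n N : nat) (isR : bool).
Variables (F : 'I_N -> 'cV[C]_n) (q : 'I_N -> C) (A : C).
Hypotheses (oF : okfam isR F) (A0 : 0 < A) (SA : frame_op F = A%:M).
Local Notation inner := (@inner C n).
Local Notation vnorm := (@vnorm C n).
Local Notation okvec := (@okvec C n).
Local Notation c := (canon_dual F).

Let Ar : A \is Num.real := gtr0_real A0.

Lemma cE i : c i = A^-1 *: F i.
Proof. by rewrite /canon_dual SA invmx_scalar mul_scalar_mx. Qed.

Definition aterm (G : 'I_N -> 'cV[C]_n) i := `|q i| * vnorm (G i) * vnorm (F i).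
Definition bterm (G : 'I_N -> 'cV[C]_n) i := `|q i| * `|inner (G i) (F i)|.

Lemma err_rank1 G i : err_op q F G i = (q i *: G i) *m adj (F i).
Proof. by rewrite /err_op scalemxAl. Qed.

Lemma O1E G : O1 isR q F G = \big[Num.max/0]_i aterm G i.
Proof.
apply: eq_bigr => i _; rewrite err_rank1 opnorm_rank1 //.
by rewrite vnormZ.
Qed.

Lemma A1E G : A1 isR q F G = \big[Num.max/0]_i ((aterm G i + bterm G i) / 2%:R).
Proof.
apply: eq_bigr => i _; rewrite err_rank1 opnorm_rank1 // specrad_rank1.
by rewrite vnormZ innerZl normrM.
Qed.

Lemma aterm_ge0 G i : 0 <= aterm G i.
Proof. by rewrite /aterm !mulr_ge0 ?vnorm_ge0. Qed.
Lemma aterm_real G i : aterm G i \is Num.real.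
Proof. exact: ger0_real (aterm_ge0 G i). Qed.
Lemma bterm_le G i : bterm G i <= aterm G i.
Proof. by rewrite /bterm /aterm -mulrA ler_wpM2l // CS. Qed.
Lemma bterm_ge0 G i : 0 <= bterm G i.
Proof. by rewrite /bterm mulr_ge0. Qed.
Lemma abterm_ge0 G i : 0 <= (aterm G i + bterm G i) / 2%:R.
Proof. by rewrite divr_ge0 ?ler0n // addr_ge0 ?aterm_ge0 ?bterm_ge0. Qed.
Lemma abterm_le G i : (aterm G i + bterm G i) / 2%:R <= aterm G i.
Proof.
rewrite ler_pdivrMr ?ltr0n // mulr_natr mulr2n lerD2l; exact: bterm_le.
Qed.

Lemma O1_ge0 G : 0 <= O1 isR q F G.
Proof. by rewrite O1E bmax_ge0 // => i; apply: aterm_real. Qed.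
Lemma O1_real G : O1 isR q F G \is Num.real.
Proof. exact: ger0_real (O1_ge0 G). Qed.
Lemma A1_ge0 G : 0 <= A1 isR q F G.
Proof. by rewrite A1E bmax_ge0 // => i; apply: ger0_real (abterm_ge0 G i). Qed.
Lemma A1_real G : A1 isR q F G \is Num.real.
Proof. exact: ger0_real (A1_ge0 G). Qed.

Lemma A1_le_O1 G : A1 isR q F G <= O1 isR q F G.
Proof.
rewrite A1E; apply: bmax_le; first by move=> i; apply: ger0_real (abterm_ge0 G i).
  exact: O1_ge0.
move=> i; apply: (le_trans (abterm_le G i)); rewrite O1E.
by apply: bmax_ub => j; apply: aterm_real.
Qed.

Lemma bterm_c i : bterm c i = aterm c i.
Proof.
rewrite /bterm /aterm !cE innerZl vnormZ normrM -mulrA; congr (_ * _).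
rewrite ger0_norm ?invr_ge0 ?(ltW A0) // -mulrA; congr (_ * _).
by rewrite ger0_norm ?inner_ge0 // -vnormK expr2.
Qed.

Lemma A1c : A1 isR q F c = O1 isR q F c.
Proof.
rewrite A1E O1E; apply: eq_bigr => i _; rewrite bterm_c.
have -> : aterm c i + aterm c i = aterm c i * 2%:R by rewrite mulr_natr mulr2n.
by rewrite mulfK // pnatr_eq0.
Qed.


Hypothesis fF : is_frame isR F.

Lemma Sv_A f : Sv F f = A *: f.
Proof. by rewrite -frame_op_mul SA mul_scalar_mx. Qed.

Lemma dual_c : is_dual isR F c.
Proof.
have R2 f : f = \sum_i inner f (c i) *: F i.
  rewrite (eq_bigr (fun i => A^-1 *: (inner f (F i) *: F i))); last first.
    by move=> i _; rewrite cE innerZr scalerA conj_Creal ?rpredV.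
  by rewrite -scaler_sumr -/(Sv F f) Sv_A scalerA mulVf ?gt_eqF ?scale1r.
split; first by move=> i; rewrite cE okvecZ ?rpredV.
split; first by apply: dual_frame fF _ => f _; apply: R2.
move=> f hf; split; last exact: R2.
rewrite (eq_bigr (fun i => A^-1 *: (inner f (F i) *: F i))); last first.
  by move=> i _; rewrite cE !scalerA mulrC.
by rewrite -scaler_sumr -/(Sv F f) Sv_A scalerA mulVf ?gt_eqF ?scale1r.
Qed.

Definition Gt (G : 'I_N -> 'cV[C]_n) (t : C) i := c i + t *: (G i - c i).

Lemma sum_affine (a : 'I_N -> C) (x y : 'I_N -> 'cV[C]_n) t :
  \sum_i a i *: (x i + t *: (y i - x i)) =
  \sum_i a i *: x i + t *: (\sum_i a i *: y i - \sum_i a i *: x i).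
Proof.
rewrite -sumrB scaler_sumr -big_split; apply: eq_bigr => i _.
by rewrite scalerDr !scalerBr !scalerA mulrC.
Qed.

Lemma sum_affine2 (a b : 'I_N -> C) (x : 'I_N -> 'cV[C]_n) t :
  \sum_i (a i + t * (b i - a i)) *: x i =
  \sum_i a i *: x i + t *: (\sum_i b i *: x i - \sum_i a i *: x i).
Proof.
rewrite -sumrB scaler_sumr -big_split; apply: eq_bigr => i _.
by rewrite scalerDl scalerBr !scalerA mulrBr scalerBl.
Qed.

Lemma Gt_dual G t : is_dual isR F G -> t \is Num.real -> is_dual isR F (Gt G t).
Proof.
move=> [oG [_ HG]] tr.
have [oc [_ Hc]] := dual_c.
have R2 f : okvec isR f -> f = \sum_i inner f (Gt G t i) *: F i.
  move=> hf.
  rewrite (eq_bigr (fun i => (inner f (c i) + t * (inner f (G i) - inner f (c i))) *: F i)); last first.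
    by move=> i _; rewrite /Gt innerDr innerZr innerBr conj_Creal.
  by rewrite sum_affine2 -(Hc f hf).2 -(HG f hf).2 subrr scaler0 addr0.
split; first by move=> i; rewrite /Gt okvecD ?okvecZ ?okvecB.
split; first exact: dual_frame fF R2.
move=> f hf; split; last exact: R2.
by rewrite sum_affine -(Hc f hf).1 -(HG f hf).1 subrr scaler0 addr0.
Qed.

Lemma Gt_neq G t j : G j != c j -> t != 0 -> Gt G t j != c j.
Proof.
move=> gne tne; apply/eqP => H.
have : t *: (G j - c j) = 0.
  by apply: (addrI (c j)); rewrite addr0.
by move/eqP; rewrite scaler_eq0 (negPf tne) subr_eq0 (negPf gne).
Qed.


Lemma key G : A1 isR q F G <= O1 isR q F c ->
  exists t, 0 < t /\ O1 isR q F (Gt G t) <= O1 isR q F c.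
Proof.
move=> hA.
set M := O1 isR q F c.
have M0 : 0 <= M by apply: O1_ge0.
have Mr : M \is Num.real by apply: ger0_real.
suff [t [t0 Ht]] : exists t, 0 < t /\ forall i, aterm (Gt G t) i <= M.
  exists t; split => //; rewrite O1E; apply: bmax_le => // i; exact: aterm_real.
apply: common_tau => i.
set u := c i; set h := G i - c i.
have GtE t : Gt G t i = u + t *: h by [].
set al := `|q i| * vnorm (F i).
have al0 : 0 <= al by rewrite mulr_ge0 ?vnorm_ge0.
have aE t : aterm (Gt G t) i = al * vnorm (u + t *: h) by rewrite /aterm mulrAC.
have mM : al * vnorm u <= M.
  have -> : al * vnorm u = aterm c i by rewrite /aterm mulrAC.
  by rewrite /M O1E; apply: bmax_ub => j; apply: aterm_real.
have [al_eq|al_ne] := eqVneq al 0.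
  by exists 1; split => // t _ _; rewrite aE al_eq mul0r.
have alp : 0 < al by rewrite lt_def al_ne al0.
move: mM; rewrite le_eqVlt => /orP [/eqP meq | mlt].
-
  have qne : `|q i| != 0.
    by apply: contra al_ne => /eqP H; rewrite /al H mul0r.
  have qp : 0 < `|q i| by rewrite lt_def qne normr_ge0.
  have Fne : F i != 0.
    by apply: contra al_ne => /eqP H; rewrite /al H vnorm0 mulr0.
  have une : u != 0.
    by rewrite /u cE scaler_eq0 negb_or invr_eq0 gt_eqF.
  have FE : F i = A *: u by rewrite /u cE scalerA mulfV ?gt_eqF ?scale1r.
  have gE : u + h = G i by rewrite /h /u addrC subrK.
  have hyp : vnorm u * vnorm (u + h) + `|inner (u + h) u| <= 2%:R * vnorm u ^+ 2.
    have h1 : (aterm G i + bterm G i) / 2%:R <= al * vnorm u.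
      rewrite meq; apply: le_trans hA; rewrite A1E.
      by apply: bmax_ub => j; apply: ger0_real (abterm_ge0 G j).
    move: h1; rewrite /aterm /bterm /al FE vnormZ innerZr conj_Creal //.
    rewrite normrM (ger0_norm (ltW A0)) -gE.
    set X := vnorm u * vnorm (u + h) + `|inner (u + h) u|.
    have -> : `|q i| * vnorm (u + h) * (A * vnorm u) + `|q i| * (A * `|inner (u + h) u|)
      = (`|q i| * A) * X by rewrite /X; ring.
    have -> : `|q i| * (A * vnorm u) * vnorm u = (`|q i| * A) * vnorm u ^+ 2 by ring.
    rewrite ler_pdivrMr ?ltr0n // => H; rewrite -(ler_pM2l (mulr_gt0 qp A0)); apply: (le_trans H).
    by rewrite le_eqVlt; apply/orP; left; apply/eqP; ring.
  have [tau [tau0 Ht]] := descent une hyp.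
  exists tau; split => // t t0 tle.
  by rewrite aE -meq ler_wpM2l // Ht.
- set D := M - al * vnorm u.
  have D0 : 0 < D by rewrite subr_gt0.
  set be := al * vnorm h.
  have be0 : 0 <= be by rewrite mulr_ge0 ?vnorm_ge0.
  have be1 : 0 < be + 1 by rewrite ltr_wpDl.
  exists (D / (be + 1)); split; first by rewrite divr_gt0.
  move=> t t0 tle.
  rewrite aE; apply: (le_trans (y := al * vnorm u + t * be)).
    rewrite /be mulrCA -mulrDr ler_wpM2l //.
    apply: (le_trans (vnorm_triangle _ _)).
    by rewrite vnormZ ger0_norm ?(ltW t0).
  rewrite -lerBrDl -/D.
  apply: (le_trans (y := D / (be + 1) * be)).
    by rewrite ler_wpM2r.
  apply: (le_trans (y := D / (be + 1) * (be + 1))).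
    by rewrite ler_wpM2l ?divr_ge0 ?(ltW D0) ?(ltW be1) // lerDl.
  by rewrite divfK ?gt_eqF.
Qed.

End Main.


Theorem theorem3p6 (C : numClosedFieldType) (isR : bool) (n N : nat)
  (F : 'I_N -> 'cV[C]_n) (p : 'I_N -> C) :
  okfam isR F ->
  is_tight_frame isR F ->
  is_prob_seq p ->
  (* S_F^{-1} F is the unique 1-erasure POD of F *)
  (forall G, is_POD isR (weight n p) F G <-> (forall i, G i = canon_dual F i)) <->
  (* Delta_F^(1) = { S_F^{-1} F } *)
  (forall G, is_PASOD isR (weight n p) F G <-> (forall i, G i = canon_dual F i)).
Proof.
move=> oF tF _.
set q := weight n p.
have [A [A0 SA]] := tight_S oF tF.
have fF : is_frame isR F.
  by case: tF => B [B0 HB]; exists B, B.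
have dc := dual_c oF A0 SA fF.
have A1cE := A1c q oF A0 SA.
have toc G : (forall i, G i = canon_dual F i) -> G = canon_dual F.
  by move=> H; apply: functional_extensionality.
have Gtr (t : C) : 0 < t -> t \is Num.real by apply: gtr0_real.
split => [HP | HQ] G.
- have cP : is_POD isR q F (canon_dual F) by apply/(HP _).
  have claim : forall G, is_dual isR F G -> A1 isR q F G <= O1 isR q F (canon_dual F) ->
      forall i, G i = canon_dual F i.
    move=> G' dG hA; apply: NNPP => Hn.
    have [j /eqP Hj] := not_all_ex_not _ _ Hn.
    have [t [t0 Ht]] := key oF A0 SA hA.
    have dGt := Gt_dual oF A0 SA fF dG (Gtr t t0).
    have : is_POD isR q F (Gt F G' t).
      split => // G'' dG''; apply: (le_trans Ht); exact: cP.2.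
    move/HP => /(_ j) /eqP; apply/negP; apply: Gt_neq => //.
    by rewrite gt_eqF.
  split.
    move=> [dG minG]; apply: claim => //.
    by rewrite -A1cE; apply: minG.
  move=> /toc ->; split => // G' dG'.
  have [//|lt] := real_leP (A1_real q oF (canon_dual F)) (A1_real q oF G').
  have := claim G' dG'; rewrite -A1cE => /(_ (ltW lt)) /toc eq.
  by move: lt; rewrite eq ltxx.
- have cQ : is_PASOD isR q F (canon_dual F) by apply/(HQ _).
  split.
    move=> [dG minG]; apply/(HQ _); split => // G' dG'.
    apply: (le_trans (A1_le_O1 q oF G)); apply: (le_trans (minG _ dc)).
    by rewrite -A1cE; apply: cQ.2.
  move=> /toc ->; split => // G' dG'.
  rewrite -A1cE; apply: (le_trans (cQ.2 _ dG')); exact: A1_le_O1 q oF G'.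
Qed.
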